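(* Let $N\ge 2$, let $e_{ij}\ge 0$ ($1\le i,j\le N$) be nonnegative similarity weights, let $a\in\{0,1\}^N$ be a treatment assignment, and let $y_1,\dots,y_N\in[0,1]$. Write $d_i=\sum_j e_{ij}$, $d_{\min}=\min_i d_i$, $e_{\mathrm{sum}}=\sum_{i,j}e_{ij}$, and $d_i(\mathrm{cut})=\sum_j \mathbb{1}(a_i\neq a_j)e_{ij}$, and assume $d_i(\mathrm{cut})>0$ for every $i$ (so that $d_i>0$ and $d_{\min}>0$). Define the counterfactual imputation weights $w_{ij}=\frac{\mathbb{1}(a_i\neq a_j)e_{ij}}{\sum_k \mathbb{1}(a_i\neq a_k)e_{ik}}$ and the oracle residuals $\epsilon_i=\left|y_i-\frac{\sum_j e_{ij}y_j}{d_i}\right|$. Then $$\sum_{i=1}^N\Big|\sum_{j} w_{ij}y_j-y_i\Big|\;\le\;\sum_{i=1}^N\epsilon_i+\frac{e_{\mathrm{sum}}-\sum_{i,j}\mathbb{1}(a_i\neq a_j)e_{ij}}{d_{\min}},$$ where all sums over $i,j$ range over ordered pairs in $\{1,\dots,N\}^2$.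
   Context: Units $i=1,\dots,N$ have covariates with pairwise similarities $e_{ij}$; $a_i=1$ denotes treatment and $a_i=0$ control. The quantity $\sum_j w_{ij}y_j$ is the estimate of unit $i$'s unobserved potential outcome obtained as a similarity-weighted average of the outcomes of units in the opposite treatment group. *)

(* Defs.v *)
From mathcomp Require Import all_boot all_order all_algebra.
Set Implicit Arguments. Unset Strict Implicit. Unset Printing Implicit Defensive.
Import Order.TTheory GRing.Theory Num.Theory.
Local Open Scope ring_scope.

Section Defs.
Variables (R : realFieldType) (N : nat).
Variables (e : 'I_N -> 'I_N -> R) (a : 'I_N -> bool) (y : 'I_N -> R).

Definition ind (i j : 'I_N) : R := if a i != a j then 1 else 0.
Definition deg (i : 'I_N) : R := \sum_(j < N) e i j.
(* d_min = min_i d_i  (seeded with the first degree; N >= 1 makes the seed irrelevant) *)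
Definition dmin : R :=
  \big[Num.min/ head 0 [seq deg i | i <- enum 'I_N]]_(i < N) deg i.
Definition esum : R := \sum_(i < N) \sum_(j < N) e i j.
Definition dcut (i : 'I_N) : R := \sum_(j < N) ind i j * e i j.
Definition ecut : R := \sum_(i < N) \sum_(j < N) ind i j * e i j.
Definition w (i j : 'I_N) : R := ind i j * e i j / dcut i.
Definition eps (i : 'I_N) : R := `| y i - (\sum_(j < N) e i j * y j) / deg i |.
End Defs.

(* Main.v *)
Require Import Defs.
From mathcomp Require Import all_boot all_order all_algebra.
From mathcomp Require Import ring lra.
Import Order.TTheory GRing.Theory Num.Theory.
Local Open Scope ring_scope.

Theorem proposition2 (R : realFieldType) (N : nat) (hN : (2 <= N)%N)
    (e : 'I_N -> 'I_N -> R) (a : 'I_N -> bool) (y : 'I_N -> R)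
    (he : forall i j, 0 <= e i j)
    (hy : forall i, 0 <= y i <= 1)
    (hcut : forall i, 0 < dcut e a i) :
  \sum_(i < N) `| \sum_(j < N) w e a i j * y j - y i |
    <= \sum_(i < N) eps e y i + (esum e - ecut e a) / dmin e.
Proof.
have ind01 : forall i j, 0 <= ind R a i j <= 1.
  by move=> i j; rewrite /ind; case: ifP => _; rewrite ?ler01 ?lexx.
have dcut_le : forall i, dcut e a i <= deg e i.
  move=> i; rewrite /dcut /deg; apply: ler_sum => j _.
  have /andP[_ h1] := ind01 i j.
  by rewrite -[leRHS]mul1r ler_wpM2r.
have deg_pos : forall i, 0 < deg e i.
  by move=> i; exact: lt_le_trans (hcut i) (dcut_le i).
have dmin_pos : 0 < dmin e.
  rewrite /dmin; apply: (big_ind (fun x => 0 < x)) => //.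
    case E: (enum 'I_N) => [|i0 s] /=; last exact: deg_pos.
    by move: (size_enum_ord N); rewrite E => HN; rewrite -HN in hN.
  by move=> x z hx hz; rewrite /Num.min; case: ifP.
have dmin_le : forall i, dmin e <= deg e i.
  move=> i; rewrite /dmin (bigD1 i) //=.
  by rewrite ge_min lexx.
have key : forall i, `| \sum_(j < N) w e a i j * y j - y i |
    <= eps e y i + (deg e i - dcut e a i) / dmin e.
  move=> i.
  set m := \sum_(j < N) w e a i j * y j.
  set A := \sum_(j < N) e i j * y j.
  have hc := hcut i; have hd := deg_pos i.
  have mE : m = (\sum_(j < N) ind R a i j * e i j * y j) / dcut e a i.
    rewrite /m mulr_suml; apply: eq_bigr => j _.
    by rewrite /w -!mulrA [_^-1 * y j]mulrC.
  have m01 : 0 <= m <= 1.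
    rewrite mE; apply/andP; split.
      apply: divr_ge0; last exact: ltW.
      apply: sumr_ge0 => j _; have /andP[h0 _] := ind01 i j.
      have /andP[h2 _] := hy j.
      by rewrite !mulr_ge0.
    rewrite ler_pdivrMr // mul1r /dcut; apply: ler_sum => j _.
    have /andP[h0 _] := ind01 i j; have /andP[_ h3] := hy j.
    by rewrite -[leRHS]mulr1 ler_wpM2l // mulr_ge0.
  have diffE : deg e i * m - A
      = \sum_(j < N) (1 - ind R a i j) * e i j * (m - y j).
    have h1 : \sum_(j < N) ind R a i j * e i j * (m - y j) = 0.
      have -> : \sum_(j < N) ind R a i j * e i j * (m - y j)
          = dcut e a i * m - \sum_(j < N) ind R a i j * e i j * y j.
        rewrite /dcut mulr_suml -sumrB; apply: eq_bigr => j _.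
        by rewrite mulrBr.
      rewrite mE mulrC divfK ?subrr //; exact: lt0r_neq0.
    have -> : \sum_(j < N) (1 - ind R a i j) * e i j * (m - y j)
        = \sum_(j < N) e i j * (m - y j)
          - \sum_(j < N) ind R a i j * e i j * (m - y j).
      rewrite -sumrB; apply: eq_bigr => j _; by rewrite !mulrBl mul1r.
    rewrite h1 subr0 /deg /A mulr_suml -sumrB; apply: eq_bigr => j _.
    by rewrite mulrBr.
  have bnd : `| deg e i * m - A | <= deg e i - dcut e a i.
    rewrite diffE.
    have -> : deg e i - dcut e a i = \sum_(j < N) (1 - ind R a i j) * e i j.
      rewrite /deg /dcut -sumrB; apply: eq_bigr => j _.
      by rewrite mulrBl mul1r.
    apply: le_trans (ler_norm_sum _ _ _) _; apply: ler_sum => j _.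
    have /andP[h0 h1] := ind01 i j.
    have h2 : 0 <= (1 - ind R a i j) * e i j by rewrite mulr_ge0 // subr_ge0.
    rewrite normrM (ger0_norm h2) -[leRHS]mulr1 ler_wpM2l //.
    have /andP[k0 k1] := hy j; have /andP[l0 l1] := m01.
    rewrite ler_norml; apply/andP; split; lra.
  have t1 : `| m - y i | <= eps e y i + `| m - A / deg e i |.
    have -> : m - y i = (A / deg e i - y i) + (m - A / deg e i) by ring.
    apply: le_trans (ler_normD _ _) _.
    by rewrite /eps -/A [`|A / _ - _|]distrC.
  apply: le_trans t1 _; rewrite lerD2l.
  have -> : m - A / deg e i = (deg e i * m - A) / deg e i.
    by field; exact: lt0r_neq0.
  rewrite normrM [`|(deg e i)^-1|]ger0_norm; last by rewrite invr_ge0 ltW.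
  apply: (@le_trans _ _ ((deg e i - dcut e a i) / deg e i)).
    by apply: ler_wpM2r => //; rewrite invr_ge0 ltW.
  apply: ler_wpM2l; first by rewrite subr_ge0.
  by rewrite lef_pV2 ?posrE.
have S : \sum_(i < N) `| \sum_(j < N) w e a i j * y j - y i |
   <= \sum_(i < N) (eps e y i + (deg e i - dcut e a i) / dmin e).
  by apply: ler_sum => i _; exact: key.
apply: le_trans S _.
rewrite big_split /= lerD2l -mulr_suml sumrB.
exact: lexx.
Qed.
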